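(* Let $T$ be a balanced tree with $\mathrm{height}(T)=2$. Then $T$ has two leaves at distance 4 from each other, and hence $T$ is mixed.
   Context: A leaf is a vertex of degree 1; the height of a vertex is its minimum distance to a leaf; $\mathrm{height}(T)$ is the maximum height of a vertex; $T$ is balanced if no two adjacent vertices have the same height. With $N(D)=\bigcup_{v\in D}\{u:uv\in E\}$, a TD-set is $D$ with $N(D)=V$, minimal if no proper subset is a TD-set; $T$ is mixed if not all minimal TD-sets have the same size. *)

(* Defs.v *)
(* A finite simple graph is a finType T with a symmetric,
   irreflexive edge relation e : rel T. *)
From mathcomp Require Import all_boot.
Set Implicit Arguments. Unset Strict Implicit. Unset Printing Implicit Defensive.

Section Graphs.
Variables (T : finType) (e : rel T).

Definition connected_graph : Prop := forall x y : T, connect e x y.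

(* a cycle: x :: p with at least 3 distinct vertices, consecutive ones
   adjacent, and the last adjacent to x *)
Definition has_cycle : Prop :=
  exists (x : T) (p : seq T),
    [/\ 2 <= size p, uniq (x :: p), path e x p & e (last x p) x].

Definition is_tree : Prop := connected_graph /\ ~ has_cycle.

Definition degree (v : T) : nat := #|[set u | e v u]|.
Definition leaf (v : T) : Prop := degree v = 1.

Definition walk_len (x y : T) (n : nat) : Prop :=
  exists p : seq T, [/\ path e x p, last x p = y & size p = n].

Definition is_dist (x y : T) (d : nat) : Prop :=
  walk_len x y d /\ forall n, walk_len x y n -> d <= n.

Definition vheight (v : T) (h : nat) : Prop :=
  (exists l, leaf l /\ is_dist v l h) /\
  (forall l d, leaf l -> is_dist v l d -> h <= d).

Definition tree_height (h : nat) : Prop :=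
  (exists v, vheight v h) /\ (forall v h', vheight v h' -> h' <= h).

Definition balanced : Prop :=
  forall u v hu hv, e u v -> vheight u hu -> vheight v hv -> hu <> hv.

(* total dominating set: N(D) = V, with N(D) the union of open neighbourhoods *)
Definition TDset (D : {set T}) : Prop :=
  forall u : T, exists2 v, v \in D & e v u.

Definition minimal_TDset (D : {set T}) : Prop :=
  TDset D /\ forall D' : {set T}, D' \proper D -> ~ TDset D'.

Definition mixed : Prop :=
  exists D1 D2 : {set T},
    [/\ minimal_TDset D1, minimal_TDset D2 & #|D1| <> #|D2|].

End Graphs.

(* Main.v *)
Require Import Defs.
From Stdlib Require Import Classical.
From mathcomp Require Import all_boot.
From mathcomp Require Import zify.
Set Implicit Arguments. Unset Strict Implicit. Unset Printing Implicit Defensive.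

Lemma nat_min (P : nat -> Prop) n : P n ->
  exists d, [/\ d <= n, P d & forall m, P m -> d <= m].
Proof.
suff: forall N n, n <= N -> P n -> exists d, [/\ d <= n, P d & forall m, P m -> d <= m].
  by move=> H; apply: H.
elim=> [|N IH] k hk hP; case: (classic (exists m, m < k /\ P m)) => [[m [hm hPm]]|hno].
- by have := leq_trans hm hk.
- exists k; split => // m hm; rewrite leqNgt; apply/negP => hlt; apply: hno; by exists m.
- have hmN : m <= N by rewrite -ltnS (leq_trans hm hk).
  have [d [hd hPd hmin]] := IH m hmN hPm.
  exists d; split => //; exact: leq_trans hd (ltnW hm).
- exists k; split => // m hm; rewrite leqNgt; apply/negP => hlt; apply: hno; by exists m.
Qed.

Lemma nat_eq1 h : h <= 2 -> h <> 2 -> h <> 0 -> h = 1.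
Proof. by case: h => [|[|[|h]]]. Qed.
Lemma nat_eq2 h : h <= 2 -> h <> 1 -> h <> 0 -> h = 2.
Proof. by case: h => [|[|[|h]]]. Qed.
Lemma nat_eq1' h : h <= 1 -> h <> 0 -> h = 1.
Proof. by case: h => [|[|h]]. Qed.

Lemma walk0 (T : finType) (e : rel T) x : walk_len e x x 0.
Proof. by exists [::]. Qed.

Lemma walk_cons (T : finType) (e : rel T) x y z n :
  e x y -> walk_len e y z n -> walk_len e x z n.+1.
Proof. move=> exy [p [hp hl hs]]; exists (y :: p); split => //=; [by rewrite exy | by rewrite hs]. Qed.

Lemma h_le (T : finType) (e : rel T) x h l n :
  vheight e x h -> leaf e l -> walk_len e x l n -> h <= n.
Proof.
move=> [_ hm] hl hw.
have [d [hd hwd hmin]] := @nat_min (walk_len e x l) _ hw.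
have := hm l d hl (conj hwd hmin); move=> hh; exact: leq_trans hh hd.
Qed.

Lemma h_ex (T : finType) (e : rel T) : connected_graph e -> (exists l, leaf e l) ->
  forall x, exists h, vheight e x h.
Proof.
move=> hc [l0 hl0] x.
case/connectP: (hc x l0) => p hp hlast.
have hP : exists l, leaf e l /\ walk_len e x l (size p).
  by exists l0; split => //; exists p; split.
have [d [_ [l [hl hw]] hmin]] := @nat_min (fun n => exists l, leaf e l /\ walk_len e x l n) _ hP.
exists d; split.
  exists l; split => //; split => // m hm; apply: hmin; by exists l.
move=> l' d' hl' [hw' _]; apply: hmin; by exists l'.
Qed.

Lemma h_uniq (T : finType) (e : rel T) x h h' : vheight e x h -> vheight e x h' -> h = h'.
Proof.
move=> [[l [hl hd]] hm] [[l' [hl' hd']] hm'].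
by apply/eqP; rewrite eqn_leq (hm l' h' hl' hd') (hm' l h hl hd).
Qed.

Lemma h0_leaf (T : finType) (e : rel T) x : vheight e x 0 -> leaf e x.
Proof.
move=> [[l [hl [[p [hp hlast hs]] _]]] _].
by case: p hp hlast hs => [|a p] _ /= hh hs //; rewrite hh.
Qed.

Lemma leaf_h0 (T : finType) (e : rel T) x h : leaf e x -> vheight e x h -> h = 0.
Proof. move=> hl hv; apply/eqP; rewrite -leqn0; exact: h_le hv hl (walk0 e x). Qed.

Lemma h1_nb (T : finType) (e : rel T) x : vheight e x 1 -> exists l, leaf e l /\ e x l.
Proof.
move=> [[l [hl [[p [hp hlast hs]] _]]] _].
case: p hp hlast hs => [|a [|b q]] //= hp ha hs; try discriminate.
move/andP: hp => [hxa _].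
by exists l; split => //; rewrite -ha.
Qed.

Lemma h_adj (T : finType) (e : rel T) x y hx hy :
  e y x -> vheight e x hx -> vheight e y hy -> hy <= hx.+1.
Proof.
move=> eyx [[l [hl [hw _]]] _] hvy; exact: h_le hvy hl (walk_cons eyx hw).
Qed.

Lemma leaf_uniq (T : finType) (e : rel T) l a b : leaf e l -> e l a -> e l b -> a = b.
Proof.
rewrite /leaf /degree => /eqP/cards1P [x hx] ha hb.
have : a \in [set u | e l u] by rewrite inE.
have : b \in [set u | e l u] by rewrite inE.
by rewrite hx !inE => /eqP -> /eqP ->.
Qed.

Lemma leaf_nb (T : finType) (e : rel T) l : leaf e l -> exists a, e l a.
Proof.
rewrite /leaf /degree => /eqP/cards1P [x hx]; exists x.
have : x \in [set u | e l u] by rewrite hx set11.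
by rewrite inE.
Qed.

Lemma has_nb (T : finType) (e : rel T) l0 : connected_graph e -> leaf e l0 ->
  forall w, exists y, e w y.
Proof.
move=> hc hl w; case/connectP: (hc w l0) => [[|y p]] /=.
- by move=> _ <-; exact: leaf_nb.
- by move=> /andP[h _] _; exists y.
Qed.

Lemma min_exists (T : finType) (e : rel T) (Q : {set T} -> Prop) :
  (forall D, Q D -> TDset e D) ->
  (forall D D' : {set T}, Q D -> D' \proper D -> TDset e D' -> Q D') ->
  forall D, Q D -> exists D', [/\ Q D', minimal_TDset e D' & D' \subset D].
Proof.
move=> hQT hQ D.
suff: forall N (D : {set T}), #|D| <= N -> Q D -> exists D' : {set T}, [/\ Q D', minimal_TDset e D' & D' \subset D].
  by move=> H; apply: H.
elim=> [|N IH] D0 hD hQD;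
  case: (classic (exists D' : {set T}, D' \proper D0 /\ TDset e D')) => [[D' [hpr hT]]|hno].
- by have := leq_trans (proper_card hpr) hD.
- exists D0; split => //.
  split; first exact: hQT.
  by move=> D' hpr hT; apply: hno; exists D'.
- have hD' : #|D'| <= N by rewrite -ltnS (leq_trans (proper_card hpr) hD).
  have [D'' [h1 h2 h3]] := IH D' hD' (hQ D0 D' hQD hpr hT).
  exists D''; split => //; exact: subset_trans h3 (proper_sub hpr).
- exists D0; split => //.
  split; first exact: hQT.
  by move=> D' hpr hT; apply: hno; exists D'.
Qed.

Theorem theorem3p34 (T : finType) (e : rel T) :
  symmetric e -> irreflexive e -> is_tree e ->
  balanced e -> tree_height e 2 ->
  (exists l1 l2 : T, [/\ leaf e l1, leaf e l2 & is_dist e l1 l2 4]) /\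
  mixed e.
Proof.
move=> hsym hirr [hconn _] hbal [[v hv] hmax].
have hleafex : exists l, leaf e l by case: hv => [[l [hl _]] _]; exists l.
have hex := h_ex hconn hleafex.
have vnl : ~ leaf e v by move=> hl; have := leaf_h0 hl hv.
have [u1 [l1 [hvu1 hu1l1 hl1]]] : exists u1 l1, [/\ e v u1, e u1 l1 & leaf e l1].
  case: hv => [[l [hl [[p [hp hlast hs]] _]]] _].
  case: p hp hlast hs => [|a [|b [|c q]]] //= hp hb hs; try discriminate.
  move/and3P: hp => [h1 h2 _].
  by exists a, b; split => //; rewrite hb.
have hvnb : forall x, e v x -> ~ leaf e x.
  by move=> x hvx hlx; have := h_le hv hlx (walk_cons hvx (walk0 e x)).
have [u2 hvu2 hu12] : exists2 u2, e v u2 & u2 != u1.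
  case: (pickP [pred x | e v x && (x != u1)]) => [u2 /andP[h1 h2] | hnone]; first by exists u2.
  exfalso; apply: vnl; rewrite /leaf /degree; apply/eqP/cards1P; exists u1.
  apply/setP => x; rewrite !inE; apply/idP/idP => [hx|/eqP ->//].
  by have := hnone x; rewrite /= hx /= => /negbT; rewrite negbK.
have [h2 hv2] := hex u2.
have h2eq : h2 = 1.
  have a1 : h2 <= 2 by apply: hmax hv2.
  have a2 : h2 <> 2 by move=> ?; subst; apply: (hbal v u2 2 2 hvu2 hv hv2).
  have a3 : h2 <> 0 by move=> ?; subst; apply: (hvnb u2 hvu2) (h0_leaf hv2).
  exact: nat_eq1.
move: hv2; rewrite h2eq => hv2.
have [l2 [hl2 hu2l2]] := h1_nb hv2.
have [h1 hv1] := hex u1.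
have h1eq : h1 = 1.
  have a1 : h1 <= 1 by apply: h_le hv1 hl1 (walk_cons hu1l1 (walk0 e l1)).
  have a3 : h1 <> 0 by move=> ?; subst; apply: (hvnb u1 hvu1) (h0_leaf hv1).
  exact: nat_eq1'.
move: hv1; rewrite h1eq => hv1.
have hn12 : ~ e u1 u2 by move=> h; exact: hbal u1 u2 1 1 h hv1 hv2 erefl.
have hl1u : forall a, e l1 a -> a = u1.
  by move=> a ha; apply: leaf_uniq hl1 ha _; rewrite hsym.
have hl2u : forall a, e l2 a -> a = u2.
  by move=> a ha; apply: leaf_uniq hl2 ha _; rewrite hsym.
have hu12' : u1 <> u2 by move=> h; move: hu12; rewrite h eqxx.
have hl12 : l1 != l2.
  apply/eqP => h; apply: hu12'; apply: hl2u; by rewrite -h hsym.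
split.
  exists l1, l2; split => //; split.
    exists [:: u1; v; u2; l2]; split => //=.
    by rewrite (hsym l1) hu1l1 (hsym u1) hvu1 hvu2 hu2l2.
  move=> n [p [hp hlast hs]]; rewrite leqNgt; apply/negP => hn.
  case: p hp hlast hs hn => [|a [|b [|c [|d q]]]] /=.
  - move=> _ h _ _; apply: hu12'; apply: hl2u; by rewrite -h hsym.
  - move=> /andP[ha _] hal _ _.
    have h1' := hl1u a ha; subst.
    have : v = u2 by apply: hl2u; rewrite hsym.
    by move=> hh; move: hvu2; rewrite -hh hirr.
  - move=> /and3P[ha hb _] hbl _ _.
    have h1' := hl1u a ha; subst.
    by apply: hu12'; apply: hl2u; rewrite hsym.
  - move=> /and4P[ha hb hc _] hcl _ _.
    have h1' := hl1u a ha; subst.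
    have hb2 : b = u2 by apply: hl2u; rewrite hsym.
    by subst; apply: hn12.
  - by move=> _ _ <-.
pose P (D : {set T}) := [/\ TDset e D, l1 \in D, l2 \in D,
   forall x, x \in D -> e u1 x -> x = l1 & forall x, x \in D -> e u2 x -> x = l2].
pose S0 := [set x | (x == l1) || (x == l2) || ~~ (e u1 x || e u2 x)].
have hPS0 : P S0.
  split.
  - move=> w.
    case: (pickP [pred y | (y \in S0) && e y w]) => [y /andP[h1' h2'] | hnone]; first by exists y.
    exfalso.
    have hbad : forall y, e w y -> [/\ y != l1, y != l2 & (e u1 y || e u2 y)].
      move=> y hwy; have := hnone y; rewrite /= inE (hsym y) hwy andbT.
      by case: (y == l1); case: (y == l2); case: (e u1 y || e u2 y).
    have hwu1 : w != u1.
      by apply/eqP => hw; case: (hbad l1); rewrite ?eqxx // hw.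
    have hwu2 : w != u2.
      by apply/eqP => hw; case: (hbad l2); rewrite ?eqxx // hw.
    have key : forall u, vheight e u 1 -> u != w -> forall y hy, e u y -> e w y ->
        vheight e y hy -> hy = 2.
      move=> u hu huw y hy huy hwy hvy.
      have ynl : ~ leaf e y.
        move=> hly; move/eqP: huw; apply.
        by apply: leaf_uniq hly _ _; rewrite hsym.
      have b1 : hy <> 0 by move=> ?; subst; exact: ynl (h0_leaf hvy).
      have b2 : hy <= 2 by apply: h_adj hu hvy; rewrite hsym.
      have b3 : hy <> 1 by move=> ?; subst; exact: hbal u y 1 1 huy hu hvy erefl.
      exact: nat_eq2.
    have key' : forall y hy, e w y -> vheight e y hy -> hy = 2.
      move=> y hy hwy hvy; case: (hbad y hwy) => _ _ /orP[] h.
      - by apply: key hv1 _ y hy h hwy hvy; rewrite eq_sym.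
      - by apply: key hv2 _ y hy h hwy hvy; rewrite eq_sym.
    have [y0 hwy0] := has_nb hconn hl1 w.
    have [hy0 hvy0] := hex y0.
    have e0 := key' y0 hy0 hwy0 hvy0; subst hy0.
    have [hw hvw] := hex w.
    have c1 : hw <= 2 by apply: hmax hvw.
    have c2 : hw <> 2 by move=> ?; subst; exact: hbal w y0 2 2 hwy0 hvw hvy0 erefl.
    have c3 : 2 <= hw.+1 by apply: h_adj hvw hvy0; rewrite hsym.
    have c4 : hw = 1 by apply: nat_eq1 => // h0; move: c3; rewrite h0.
    subst hw.
    have [z [hlz hwz]] := h1_nb hvw.
    have [hz hvz] := hex z.
    have := key' z hz hwz hvz.
    by rewrite (leaf_h0 hlz hvz).
  - by rewrite inE eqxx.
  - by rewrite inE eqxx orbT.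
  - move=> x; rewrite inE => /orP[/orP[/eqP //|/eqP hx]|hx] hux.
      by subst; exfalso; apply: hu12'; apply: hl2u; rewrite hsym.
    by move: hx; rewrite hux.
  - move=> x; rewrite inE => /orP[/orP[/eqP hx|/eqP //]|hx] hux.
      by subst; exfalso; apply: hu12'; symmetry; apply: hl1u; rewrite hsym.
    by move: hx; rewrite hux orbT.
have hPT : forall D, P D -> TDset e D by move=> D [].
have hPcl : forall D D' : {set T}, P D -> D' \proper D -> TDset e D' -> P D'.
  move=> D D' [hT h1' h2' h3 h4] hpr hT'.
  have hsub := subsetP (proper_sub hpr).
  split => //.
  - have [y hy hyu] := hT' u1.
    by rewrite -(h3 y (hsub y hy)) // hsym.
  - have [y hy hyu] := hT' u2.
    by rewrite -(h4 y (hsub y hy)) // hsym.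
  - by move=> x hx; apply: h3; apply: hsub.
  - by move=> x hx; apply: h4; apply: hsub.
have [D1 [hP1 hmin1 _]] := min_exists hPT hPcl hPS0.
case: hP1 => hT1 hl1D hl2D _ _.
pose S := v |: (D1 :\: [set l1; l2]).
have hTS : TDset e S.
  move=> w; have [y hy hyw] := hT1 w.
  case: (eqVneq y l1) => [hy1|hy1].
    subst y; have := hl1u w hyw => ->; exists v => //; by rewrite !inE eqxx.
  case: (eqVneq y l2) => [hy2|hy2].
    subst y; have := hl2u w hyw => ->; exists v => //; by rewrite !inE eqxx.
  exists y => //; by rewrite !inE negb_or hy1 hy2 hy orbT.
have [D2 [[hT2 _] hmin2 hsub2]] :=
  @min_exists T e (fun X => TDset e X /\ X \subset S)
    (fun (D : {set T}) h => h.1)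
    (fun (D D' : {set T}) h hpr hT => conj hT (subset_trans (proper_sub hpr) h.2))
    S (conj hTS (subxx_hint (mem S))).
exists D1, D2; split => //.
have c1 := subset_leq_card hsub2.
have c2 : #|S| <= #|D1 :\: [set l1; l2]|.+1.
  by rewrite cardsU1; case: (v \notin _).
have c3 := cardsID [set l1; l2] D1.
have c4 : D1 :&: [set l1; l2] = [set l1; l2].
  apply/setIidPr; apply/subsetP => x; rewrite !inE => /orP[] /eqP ->; done.
rewrite c4 cards2 hl12 in c3.
have hlt : #|D2| < #|D1|.
  rewrite -c3; apply: (leq_ltn_trans c1); apply: (leq_ltn_trans c2).
  by rewrite /= add2n.
by move=> hh; rewrite hh ltnn in hlt.
Qed.
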